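(* Let $\lambda$ be a pre-specified threshold, and let $\Pi^*_\lambda$ denote the set of solutions of the constrained problem $$\max_{\pi}\ R(\pi)\quad\text{subject to}\quad \mathrm{THR}(\pi)\le \lambda ,$$ where the maximum is over all individualized treatment rules $\pi:\mathcal X\to\{0,1\}$. (a) If $\lambda<\mathbb{E}[\mathrm{THR}(X)\cdot \mathbb{I}\{\tau(X)>0\}]$, then the oracle rule is $$\pi^*_\lambda(x)=\mathbb{I}\{\tau(x)-\beta^*\,\mathrm{THR}(x)>0\},$$ where $\beta^*$ satisfies $$\mathbb{E}\big[\mathrm{THR}(X)\cdot \mathbb{I}\{\tau(X)-\beta^*\,\mathrm{THR}(X)>0\}\big]=\lambda .$$ That is, this rule belongs to $\Pi^*_\lambda$. (b) If $\lambda\ge \mathbb{E}[\mathrm{THR}(X)\cdot \mathbb{I}\{\tau(X)>0\}]$, then the oracle rule is $\pi^*_\lambda(x)=\mathbb{I}\{\tau(x)>0\}$. This is the same rule that maximizes $R(\pi)$ when no harm constraint is imposed.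
   Context: We work in the potential outcomes framework with a superpopulation of random tuples $\{X,A,Y(1),Y(0)\}$. Here $X\in\mathcal X$ are pre-treatment covariates, $A\in\{0,1\}$ is a binary treatment, and $Y(a)\in\{0,1\}$ is the binary potential outcome under treatment $a$; the value $1$ is the favorable outcome. Notation: - Conditional average treatment effect: $\tau(x)=\mathbb{E}\{Y(1)-Y(0)\mid X=x\}$. - Conditional treatment harm rate: $\mathrm{THR}(x)=\mathbb{P}(Y(0)=1,Y(1)=0\mid X=x)$. - An individualized treatment rule (ITR) is any map $\pi:\mathcal X\to\{0,1\}$. - Reward of an ITR: $R(\pi)=\mathbb{E}[\pi(X)Y(1)+\{1-\pi(X)\}Y(0)]$. - Harm rate of an ITR: $\mathrm{THR}(\pi)=\mathbb{E}\{\mathrm{THR}(X)\pi(X)\}$. *)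

(* Defs.v *)
From HB Require Import structures.
From mathcomp Require Import all_boot all_order all_algebra.
From mathcomp Require Import all_classical all_reals all_analysis.
Set Implicit Arguments. Unset Strict Implicit. Unset Printing Implicit Defensive.
Import Order.TTheory GRing.Theory Num.Theory.
Local Open Scope classical_set_scope.
Local Open Scope ring_scope.

Section Defs.
Context (R : realType) (d : measure_display) (Omega : measurableType d)
  (P : probability Omega R) (dX : measure_display) (Xs : measurableType dX)
  (X : Omega -> Xs).

(* f is a version of the conditional expectation E[Z | X = x]:
   f is measurable and E[Z 1{X in B}] = E[f(X) 1{X in B}] for every
   measurable B. *)
Definition is_cond_exp (Z : Omega -> R) (f : Xs -> R) : Prop :=
  measurable_fun setT f /\
  forall B : set Xs, measurable B ->
    (\int[P]_(w in X @^-1` B) (Z w)%:E =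
     \int[P]_(w in X @^-1` B) (f (X w))%:E)%E.

Definition itr_measurable (pi : Xs -> bool) : Prop :=
  measurable (pi @^-1` [set true]).

Definition reward (Y1 Y0 : Omega -> R) (pi : Xs -> bool) : \bar R :=
  (\int[P]_w ((pi (X w))%:R * Y1 w + (1 - (pi (X w))%:R) * Y0 w)%:E)%E.

Definition harm_rate (THR : Xs -> R) (pi : Xs -> bool) : \bar R :=
  (\int[P]_w (THR (X w) * (pi (X w))%:R)%:E)%E.

Definition constrained_optimal (Y1 Y0 : Omega -> R) (THR : Xs -> R)
  (lam : R) (pi : Xs -> bool) : Prop :=
  itr_measurable pi /\ (harm_rate THR pi <= lam%:E)%E /\
  forall pi' : Xs -> bool, itr_measurable pi' ->
    (harm_rate THR pi' <= lam%:E)%E ->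
    (reward Y1 Y0 pi' <= reward Y1 Y0 pi)%E.

End Defs.

(* Main.v *)
Require Import Defs.
From HB Require Import structures.
From mathcomp Require Import all_boot all_order all_algebra.
From mathcomp Require Import all_classical all_reals all_analysis.
From mathcomp Require Import ring lra.
Import Order.TTheory GRing.Theory Num.Theory.
Local Open Scope classical_set_scope.
Local Open Scope ring_scope.

Lemma bnd_int (R : realType) d (T : measurableType d) (P : probability T R)
  (f : T -> R) : measurable_fun setT f -> (forall w, `|f w| <= 1) ->
  P.-integrable setT (EFin \o f).
Proof.
move=> mf hf.
have h1 := @finite_measure_integrable_cst _ _ _ P setT 1 measurableT.
apply: (le_integrable measurableT _ _ h1).
  exact/measurable_realfun.measurable_EFinP.
by move=> x _; rewrite /= lee_fin normr1 hf.
Qed.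

Lemma fin_int (R : realType) d (T : measurableType d) (P : probability T R)
  (f : T -> R) : measurable_fun setT f ->
  (\int[P]_w (f w)%:E)%E \is a fin_num ->
  P.-integrable setT (EFin \o f).
Proof.
move=> mf hf; apply/integrableP; split; first exact/measurable_realfun.measurable_EFinP.
by rewrite integral_fin_num_abs.
Qed.

Lemma intD_EFin (R : realType) d (T : measurableType d) (P : probability T R)
  (f g : T -> R) : P.-integrable setT (EFin \o f) -> P.-integrable setT (EFin \o g) ->
  P.-integrable setT (EFin \o (fun w => f w + g w)).
Proof.
move=> hf hg; apply: (eq_integrable measurableT _) (integrableD measurableT hf hg) => w _.
by rewrite /= EFinD.
Qed.

Lemma intZ_EFin (R : realType) d (T : measurableType d) (P : probability T R)
  (k : R) (f : T -> R) : P.-integrable setT (EFin \o f) ->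
  P.-integrable setT (EFin \o (fun w => k * f w)).
Proof.
move=> hf; apply: (eq_integrable measurableT _) (integrableZl measurableT k hf) => w _.
by rewrite /= EFinM.
Qed.

Lemma integralZ_EFin (R : realType) d (T : measurableType d) (P : probability T R)
  (k : R) (f : T -> R) : P.-integrable setT (EFin \o f) ->
  (\int[P]_w (k * f w)%:E = k%:E * \int[P]_w (f w)%:E)%E.
Proof.
move=> hf; under eq_integral do rewrite EFinM.
exact: (@integralZl _ _ _ P setT measurableT (EFin \o f) hf k).
Qed.

Lemma integralD_EFin' (R : realType) d (T : measurableType d) (P : probability T R)
  (f g : T -> R) : P.-integrable setT (EFin \o f) -> P.-integrable setT (EFin \o g) ->
  (\int[P]_w (f w + g w)%:E = \int[P]_w (f w)%:E + \int[P]_w (g w)%:E)%E.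
Proof.
move=> hf hg; under eq_integral do rewrite EFinD.
exact: (integralD_EFin measurableT hf hg).
Qed.

Lemma ind_eq (R : realType) d (T : measurableType d) dX (Xs : measurableType dX)
  (X : T -> Xs) (pi : Xs -> bool) (w : T) :
  (pi (X w))%:R = (w \in X @^-1` (pi @^-1` [set true])) %:R :> R.
Proof.
case: (boolP (w \in X @^-1` (pi @^-1` [set true]))) => h.
  by move/set_mem: h; rewrite /preimage /= => ->.
case E: (pi (X w)) => //; case/negP: h; apply/mem_set; exact: E.
Qed.

Lemma mkcond_pi (R : realType) d (T : measurableType d) (P : probability T R)
  dX (Xs : measurableType dX) (X : T -> Xs) (pi : Xs -> bool) (g : T -> R) :
  (\int[P]_(w in X @^-1` (pi @^-1` [set true])) (g w)%:E =
   \int[P]_w ((pi (X w))%:R * g w)%:E)%E.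
Proof.
rewrite integral_mkcond; apply: eq_integral => w _.
rewrite patchE (@ind_eq R _ _ _ _ X pi w); case: (w \in _) => /=.
  by rewrite mul1r.
by rewrite mul0r.
Qed.

Theorem theorem1 (R : realType) (d : measure_display) (Omega : measurableType d)
  (P : probability Omega R) (dX : measure_display) (Xs : measurableType dX)
  (X : Omega -> Xs) (Y1 Y0 : Omega -> R) (tau THR : Xs -> R) (lam : R) :
  measurable_fun setT X ->
  measurable_fun setT Y1 -> measurable_fun setT Y0 ->
  (forall w, Y1 w = 0 \/ Y1 w = 1) ->
  (forall w, Y0 w = 0 \/ Y0 w = 1) ->
  is_cond_exp P X (fun w => Y1 w - Y0 w) tau ->
  is_cond_exp P X (fun w => Y0 w * (1 - Y1 w)) THR ->
  ((lam%:E < harm_rate P X THR (fun x => (0 < tau x)%R))%E ->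
     forall beta : R,
       harm_rate P X THR (fun x => (0 < tau x - beta * THR x)%R) = lam%:E ->
       constrained_optimal P X Y1 Y0 THR lam (fun x => (0 < tau x - beta * THR x)%R))
  /\
  ((lam%:E >= harm_rate P X THR (fun x => (0 < tau x)%R))%E ->
     constrained_optimal P X Y1 Y0 THR lam (fun x => (0 < tau x)%R) /\
     forall pi : Xs -> bool, itr_measurable pi ->
       (reward P X Y1 Y0 pi <= reward P X Y1 Y0 (fun x => (0 < tau x)%R))%E).
Proof.
move=> mX mY1 mY0 hY1 hY0 [mtau cetau] [mTHR ceTHR].
have mtX : measurable_fun setT (tau \o X) by exact: measurableT_comp.
have mhX : measurable_fun setT (THR \o X) by exact: measurableT_comp.
have iD : P.-integrable setT (EFin \o (fun w => Y1 w - Y0 w)).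
  apply: bnd_int; first exact: measurable_realfun.measurable_funB.
  by move=> w; case: (hY1 w) => ->; case: (hY0 w) => ->; rewrite /=; 
     rewrite ?subrr ?subr0 ?sub0r ?normrN ?normr0 ?normr1.
have iH : P.-integrable setT (EFin \o (fun w => Y0 w * (1 - Y1 w))).
  apply: bnd_int.
    apply: measurable_realfun.measurable_funM => //.
    apply: measurable_realfun.measurable_funB => //; exact: measurable_cst.
  by move=> w; case: (hY1 w) => ->; case: (hY0 w) => ->; 
     rewrite ?subrr ?subr0 ?mul0r ?mul1r ?normr0 ?normr1.
have iY0 : P.-integrable setT (EFin \o Y0).
  apply: bnd_int => // w.
  by case: (hY0 w) => ->; rewrite ?normr0 ?normr1.
have it : P.-integrable setT (EFin \o (tau \o X)).
  apply: fin_int => //.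
  have := cetau setT measurableT; rewrite preimage_setT => <-.
  exact: integrable_fin_num.
have ih : P.-integrable setT (EFin \o (THR \o X)).
  apply: fin_int => //.
  have := ceTHR setT measurableT; rewrite preimage_setT => <-.
  exact: integrable_fin_num.
have mA : forall pi, itr_measurable pi ->
    measurable (X @^-1` (pi @^-1` [set true])).
  by move=> pi hpi; rewrite -[X @^-1` _]setTI; exact: mX.
have ma : forall pi, itr_measurable pi ->
    measurable_fun setT (fun w => (pi (X w))%:R : R).
  move=> pi hpi.
  rewrite (_ : (fun w => _) = \1_(X @^-1` (pi @^-1` [set true]))); last first.
    by apply/funext => w; rewrite indicE (@ind_eq R _ _ _ _ X pi w).
  exact: measurable_realfun.measurable_indic (mA _ hpi).
have iat : forall pi, itr_measurable pi ->
    P.-integrable setT (EFin \o (fun w => (pi (X w))%:R * tau (X w))).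
  move=> pi hpi.
  apply: (le_integrable measurableT _ _ it).
    apply/measurable_realfun.measurable_EFinP.
    exact: measurable_realfun.measurable_funM (ma _ hpi) mtX.
  move=> w _; rewrite /= lee_fin normrM.
  by case: (pi (X w)); rewrite /= ?normr1 ?normr0 ?mul1r ?mul0r.
have iha : forall pi, itr_measurable pi ->
    P.-integrable setT (EFin \o (fun w => THR (X w) * (pi (X w))%:R)).
  move=> pi hpi.
  apply: (le_integrable measurableT _ _ ih).
    apply/measurable_realfun.measurable_EFinP.
    exact: measurable_realfun.measurable_funM mhX (ma _ hpi).
  move=> w _; rewrite /= lee_fin normrM.
  by case: (pi (X w)); rewrite /= ?normr1 ?normr0 ?mulr1 ?mulr0.
have rew : forall pi, itr_measurable pi ->
    reward P X Y1 Y0 pi =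
    (\int[P]_w (Y0 w)%:E + \int[P]_w ((pi (X w))%:R * tau (X w))%:E)%E.
  move=> pi hpi; rewrite /reward.
  transitivity (\int[P]_w (Y0 w + (pi (X w))%:R * (Y1 w - Y0 w))%:E)%E.
    by apply: eq_integral => w _; congr EFin; ring.
  rewrite integralD_EFin' //; last first.
    apply: (le_integrable measurableT _ _ iD).
      apply/measurable_realfun.measurable_EFinP.
      apply: measurable_realfun.measurable_funM (ma _ hpi) _.
      exact: measurable_realfun.measurable_funB.
    move=> w _; rewrite /= lee_fin normrM.
    by case: (pi (X w)); rewrite /= ?normr1 ?normr0 ?mul1r ?mul0r.
  congr (_ + _)%E.
  rewrite -!mkcond_pi.
  exact: cetau (pi @^-1` [set true]) hpi.
have Y0fin : (\int[P]_w (Y0 w)%:E)%E \is a fin_num by exact: integrable_fin_num.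
have cmp : forall pi pi', itr_measurable pi -> itr_measurable pi' ->
    (\int[P]_w ((pi' (X w))%:R * tau (X w))%:E <=
     \int[P]_w ((pi (X w))%:R * tau (X w))%:E)%E ->
    (reward P X Y1 Y0 pi' <= reward P X Y1 Y0 pi)%E.
  by move=> pi pi' hpi hpi' hle; rewrite !rew // leeD2lE.
have m0 : itr_measurable (fun x => (0 < tau x)%R).
  rewrite /itr_measurable -[_ @^-1` _]setTI.
  have := measurable_realfun.measurable_fun_ltr (measurable_cst (0%R : R)) mtau.
  move=> /(_ measurableT [set true]); apply; exact: I.
have mb : forall beta, itr_measurable (fun x => (0 < tau x - beta * THR x)%R).
  move=> beta; rewrite /itr_measurable -[_ @^-1` _]setTI.
  have : measurable_fun setT (fun x => tau x - beta * THR x).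
    apply: measurable_realfun.measurable_funB => //.
    apply: measurable_realfun.measurable_funM => //; exact: measurable_cst.
  move=> /(measurable_realfun.measurable_fun_ltr (measurable_cst (0%R : R))).
  move=> /(_ measurableT [set true]); apply; exact: I.
have opt0 : forall pi : Xs -> bool, itr_measurable pi ->
    (reward P X Y1 Y0 pi <= reward P X Y1 Y0 (fun x => (0 < tau x)%R))%E.
  move=> pi hpi; apply: (cmp (fun x => (0 < tau x)%R) pi m0 hpi).
  apply: (le_integral measurableT); [exact: (iat _ hpi)|exact: (iat _ m0)|].
  move=> w _; rewrite lee_fin.
  case: (pi (X w)); have [h|h] := ltP 0 (tau (X w));
    rewrite /= ?mul1r ?mul0r //; lra.
split.
  move=> hlt beta hb.
  have bge : 0 <= beta.
    rewrite leNgt; apply/negP => bneg.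
    have : (harm_rate P X THR (fun x => (0 < tau x)%R) <=
            harm_rate P X THR (fun x => (0 < tau x - beta * THR x)%R))%E.
      apply: (le_integral measurableT); [exact: (iha _ m0)|exact: (iha _ (mb beta))|].
      move=> w _; rewrite lee_fin.
      have [h1|h1] := ltP 0 (tau (X w)); have [h2|h2] := ltP 0 (tau (X w) - beta * THR (X w));
        rewrite /= ?mulr1 ?mulr0 //; nra.
    rewrite hb => hle.
    by move: (lt_le_trans hlt hle); rewrite ltxx.
  split; first exact: mb.
  split; first by rewrite hb.
  move=> pi' hpi' hharm; apply: (cmp (fun x => (0 < tau x - beta * THR x)%R) pi' (mb beta) hpi').
  set pb := (fun x => (0 < tau x - beta * THR x)%R).
  have key : (\int[P]_w ((pi' (X w))%:R * tau (X w) +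
                         beta * (THR (X w) * (pb (X w))%:R))%:E <=
              \int[P]_w ((pb (X w))%:R * tau (X w) +
                         beta * (THR (X w) * (pi' (X w))%:R))%:E)%E.
    apply: (le_integral measurableT).
    - apply: intD_EFin; first exact: iat.
      by apply: intZ_EFin; apply: iha; exact: mb.
    - apply: intD_EFin; first by apply: iat; exact: mb.
      by apply: intZ_EFin; exact: iha.
    move=> w _; rewrite lee_fin /pb.
    case: (pi' (X w)); have [h2|h2] := ltP 0 (tau (X w) - beta * THR (X w));
      rewrite /= ?mulr1 ?mulr0 ?mul1r ?mul0r ?addr0 ?add0r //; nra.
  move: key.
  rewrite integralD_EFin'; last by apply: intZ_EFin; apply: iha; exact: mb.
    2: exact: iat.
  rewrite integralD_EFin'; last by apply: intZ_EFin; exact: iha.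
    2: by apply: iat; exact: mb.
  rewrite integralZ_EFin; last by apply: iha; exact: mb.
  rewrite integralZ_EFin; last exact: iha.
  rewrite -/(harm_rate P X THR pb) -/(harm_rate P X THR pi') hb => key.
  have hfin : (beta%:E * lam%:E)%E \is a fin_num by [].
  rewrite -(leeD2rE _ _ hfin).
  apply: (le_trans key).
  rewrite leeD2lE; last exact: integrable_fin_num (iat _ (mb beta)).
  by apply: lee_wpmul2l => //; rewrite lee_fin.
move=> hge; split; last exact: opt0.
split; first exact: m0.
split; first exact: hge.
by move=> pi' hpi' _; exact: opt0.
Qed.
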